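(* Let $P$ be a set of $n$ points in the plane in convex position, let $S$ be an optimal dominating set of $G(P)$ with $k=|S|$, let $\phi:\mathcal{A}\rightarrow S$ be an assignment satisfying properties (1)–(3) below, and let $(p_i,p_j)$ be a decoupling pair for $\phi$. Properties: (1) $\phi$ is line separable; (2) each center $p\in S$ is assigned at most two sublists, one of which contains $p$; (3) for any center $p_a$ assigned a second sublist $\beta_a$ (not containing $p_a$), there exist $p_t\in\beta_a$ and centers $q_1,q_2\in S$ with $q_1\in P(a,t)$, $q_2\in P(t,a)$, $p_t\notin D_{q_1}$, $p_t\notin D_{q_2}$. Then there exists an ordering $p_{i_1},p_{i_2},\ldots,p_{i_k}$ of all centers of $S$ such that: (i) $p_{i_1}=p_i$ and $p_{i_k}=p_j$; (ii) the sequence of centers of $S$ having at least one sublist in $P[i,j]$, ordered by the positions of their sublists along $P[i,j]$ from $p_i$ to $p_j$, is a (not necessarily contiguous) subsequence of the ordering, and likewise the sequence of centers having at least one sublist in $P[j,i]$, ordered by the positions of their sublists along $P[j,i]$ from $p_i$ to $p_j$, is a subsequence of the ordering; (iii) for every $1\le t\le k$, the union $\bigcup_{l=1}^{t}G_{i_l}$ of the groups of the first $t$ centers is a sublist of $P$; (iv) for every $2\le t\le k$, $\bigcup_{l=1}^{t-1}G_{i_l}\subseteq\bigcup_{l=1}^{t}G_{i_l}$; (v) for every $1\le t\le k$, each sublist assigned to $p_{i_t}$ appears at one end of $\bigcup_{l=1}^{t}G_{i_l}$ (for $t=k$ this union is the whole cyclic list, which is viewed as a list by cutting it right after the clockwise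 endpoint of $G_{i_k}$).
   Context: $P$ is in convex position (every point is a hull vertex), no three points collinear, no four cocircular; $P$ is the cyclic list $\langle p_1,\dots,p_n\rangle$ counterclockwise along the hull. A sublist is a contiguous subsequence of the cyclic list. $P[i,j]$ is the sublist from $p_i$ counterclockwise to $p_j$ inclusive; $P(i,j)$ excludes $p_i,p_j$. $D_p$ is the closed unit disk centered at $p$. $G(P)$ has an edge between two points of $P$ iff their distance is at most $1$. A dominating set $S\subseteq P$: every point of $P$ is in $S$ or within distance $1$ of a point of $S$; its points are centers. Optimal dominating set: the points carry positive weights and $S$ is a dominating set of minimum total weight (unit weights give the minimum-cardinality case). A partition $\mathcal{A}$ of $P$ is a partition of the cyclic list into consecutive nonempty disjoint sublists. An assignment $\phi:\mathcal{A}\to S$ maps each sublist $\alpha$ to one center $p$ with $\alpha\subseteq D_p$; the group $G_p$ (written $G_{i_l}$ for $p=p_{i_l}$) is the set of points in sublists assigned to $p$. $\phi$ is line separable if for every two distinct centers some line has the points of one group on one side or on the line and those of the other group strictly on the other side. A decoupling pair is a pair of centers $(p_i,p_j)$ such that each of $p_i,p_j$ is assigned only one sublist, and every center assigned two sublists has one in $P(i,j)$ and the other in $P(j,i)$. *)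

(* Defs.v *)
From HB Require Import structures.
From mathcomp Require Import all_boot all_order all_algebra.
From mathcomp Require Import reals.

Set Implicit Arguments.
Unset Strict Implicit.
Unset Printing Implicit Defensive.

Import Order.TTheory GRing.Theory Num.Theory.
Local Open Scope ring_scope.

Section Defs.
Variable R : realType.
Variable n : nat.
Variable p : 'I_n -> R * R.

Definition dist2 (u v : R * R) : R := (u.1 - v.1) ^+ 2 + (u.2 - v.2) ^+ 2.

Definition orient (u v w : R * R) : R :=
  (v.1 - u.1) * (w.2 - u.2) - (v.2 - u.2) * (w.1 - u.1).

Definition in_hull_of_others (a : 'I_n) : Prop :=
  exists lam : 'I_n -> R,
    [/\ forall b, 0 <= lam b, lam a = 0, \sum_b lam b = 1,
        \sum_b lam b * (p b).1 = (p a).1 & \sum_b lam b * (p b).2 = (p a).2].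

Definition cocircular4 (a b c d : 'I_n) : Prop :=
  exists (cx cy r : R), forall x, x \in [:: a; b; c; d] ->
    ((p x).1 - cx) ^+ 2 + ((p x).2 - cy) ^+ 2 = r.

(* Standing assumptions: convex position (every point a hull vertex),
   no three collinear, no four cocircular, indices listed counterclockwise. *)
Definition standing_assumptions : Prop :=
  [/\ forall a, ~ in_hull_of_others a,
      forall a b c : 'I_n, a != b -> b != c -> a != c -> orient (p a) (p b) (p c) != 0,
      forall a b c d : 'I_n, uniq [:: a; b; c; d] -> ~ cocircular4 a b c d
    & forall a b c : 'I_n, (a < b < c)%N -> 0 < orient (p a) (p b) (p c)].

Definition in_disk (c x : 'I_n) : bool := dist2 (p c) (p x) <= 1.

Definition gedge (a b : 'I_n) : bool := (a != b) && (dist2 (p a) (p b) <= 1).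

Definition dominating (S : {set 'I_n}) : Prop :=
  forall x : 'I_n, x \in S \/ exists2 s, s \in S & gedge s x.

Definition optimal_dominating (w : 'I_n -> R) (S : {set 'I_n}) : Prop :=
  dominating S /\
  forall T : {set 'I_n}, dominating T -> \sum_(x in S) w x <= \sum_(x in T) w x.

Definition off (s x : 'I_n) : nat := ((x + n - s) %% n)%N.

(* the sublist starting at (the index) s %% n of length len (counterclockwise) *)
Definition arc (s len : nat) : {set 'I_n} :=
  [set x : 'I_n | ((x + n - s %% n) %% n < len)%N].

Definition is_sublist (U : {set 'I_n}) : Prop :=
  exists s len : nat, [/\ (0 < len <= n)%N & U = arc s len].

Definition Pcc (i j : 'I_n) : {set 'I_n} := arc i (off i j).+1.
Definition Poo (i j : 'I_n) : {set 'I_n} :=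
  [set x : 'I_n | (0 < off i x < off i j)%N].

Definition walk (i j : 'I_n) : seq 'I_n :=
  [seq insubd i ((i + m) %% n)%N | m <- iota 0 (off i j).+1].

Variable A : {set {set 'I_n}}.
Variable phi : {set 'I_n} -> 'I_n.
Variable S : {set 'I_n}.

Definition is_partition : Prop :=
  partition A [set: 'I_n] /\ forall B, B \in A -> is_sublist B.

Definition is_assignment : Prop :=
  forall B, B \in A -> phi B \in S /\ (forall x, x \in B -> in_disk (phi B) x).

Definition assigned (c : 'I_n) : {set {set 'I_n}} := [set B in A | phi B == c].
Definition group (c : 'I_n) : {set 'I_n} := \bigcup_(B in assigned c) B.

Definition weakly_sep (X Y : {set 'I_n}) : Prop :=
  exists (al be ga : R), [/\ (al != 0) || (be != 0),
    forall x, x \in X -> al * (p x).1 + be * (p x).2 <= ga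
  & forall y, y \in Y -> ga < al * (p y).1 + be * (p y).2].

Definition line_separable : Prop :=
  forall c d, c \in S -> d \in S -> c != d ->
    weakly_sep (group c) (group d) \/ weakly_sep (group d) (group c).

Definition property2 : Prop :=
  forall c, c \in S -> (#|assigned c| <= 2)%N /\
    exists2 B, B \in assigned c & c \in B.

Definition property3 : Prop :=
  forall a B, a \in S -> B \in assigned a -> a \notin B ->
    exists2 t, t \in B & exists q1 q2,
      [/\ q1 \in S, q2 \in S, q1 \in Poo a t & q2 \in Poo t a] /\
      ~~ in_disk q1 t /\ ~~ in_disk q2 t.

Definition decoupling_pair (i j : 'I_n) : Prop :=
  [/\ i \in S, j \in S, i != j, #|assigned i| = 1%N /\ #|assigned j| = 1%N &
      forall c, c \in S -> #|assigned c| = 2%N ->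
        exists B1 B2, [/\ B1 \in assigned c, B2 \in assigned c,
                          B1 \subset Poo i j & B2 \subset Poo j i]].

Definition centers_along (i j : 'I_n) : seq 'I_n :=
  [seq phi B | B <- undup [seq pblock A x | x <- walk i j & pblock A x \subset Pcc i j]].

Definition prefix_union (ord : seq 'I_n) (t : nat) : {set 'I_n} :=
  \bigcup_(c <- take t ord) group c.

(* B appears at one end of the sublist U (read as a list; when U is the whole
   cyclic list any cut point s is allowed) *)
Definition at_one_end (B U : {set 'I_n}) : Prop :=
  exists s len m : nat, [/\ (0 < len <= n)%N, (0 < m <= len)%N, U = arc s len &
    B = arc s m \/ B = arc (s + len - m)%N m].

End Defs.

(* Main.v *)
Require Import Defs.
From HB Require Import structures.
From mathcomp Require Import all_boot all_order all_algebra.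
From mathcomp Require Import reals.
From mathcomp Require Import ring lra zify.
Import Order.TTheory GRing.Theory Num.Theory.

Module Aux.
Set Implicit Arguments.
Unset Strict Implicit.
Unset Printing Implicit Defensive.

Section Arith.
Variable n : nat.
Implicit Types (s x y a b : 'I_n).

Lemma mod2 u : 0 < n -> u < n + n -> u %% n = if u < n then u else u - n.
Proof.
move=> n0 lt; case: ifP => h; first by rewrite modn_small.
have -> : u = (u - n) + n by lia.
rewrite modnDr modn_small //; lia.
Qed.

Lemma offE s x : off s x = if s <= x then x - s else x + n - s.
Proof.
have xn := ltn_ord x; have sn := ltn_ord s.
rewrite /off mod2; [|lia|lia].
case: ifP; case: ifP; lia.
Qed.

Lemma off_lt s x : off s x < n.
Proof. rewrite offE; have := ltn_ord x; have := ltn_ord s; case: ifP; lia. Qed.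

Lemma offB a b x : off a x =
  if off b a <= off b x then off b x - off b a else off b x + n - off b a.
Proof.
have := ltn_ord x; have := ltn_ord a; have := ltn_ord b.
rewrite !offE; do 4 case: ifP; lia.
Qed.

Lemma off_inj s x y : off s x = off s y -> x = y.
Proof.
have := ltn_ord x; have := ltn_ord y; have := ltn_ord s.
rewrite !offE => ? ? ? H; apply: val_inj => /=; move: H; do 2 case: ifP; lia.
Qed.

Lemma offss s : off s s = 0.
Proof. by rewrite offE leqnn subnn. Qed.

Definition ptk s k : 'I_n := insubd s ((s + k) %% n).

Lemma off_ptk s k : k < n -> off s (ptk s k) = k.
Proof.
move=> kn; have n0 : 0 < n by lia.
rewrite offE /ptk val_insubd ltn_pmod // mod2; [|lia|have := ltn_ord s; lia].
have := ltn_ord s; do 2 case: ifP; lia.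
Qed.

Lemma ptk_off s x : ptk s (off s x) = x.
Proof. apply: (@off_inj s); by rewrite off_ptk // off_lt. Qed.

Definition off_at r q := if r <= q then q - r else q + n - r.

Lemma in_arc s (a : nat) len x :
  (x \in Defs.arc n (s + a) len) = (off_at (a %% n) (off s x) < len).
Proof.
have n0 : 0 < n by have := ltn_ord s; lia.
have sn := ltn_ord s; have xn := ltn_ord x.
rewrite /Defs.arc inE -modnDmr.
have : a %% n < n by rewrite ltn_pmod.
move: (a %% n) => r rn.
rewrite /off_at offE (mod2 (u := s + r)); [|lia|lia].
case: ifP => h1.
  rewrite mod2; [|lia|lia]; do 3 case: ifP; lia.
rewrite mod2; [|lia|lia]; do 3 case: ifP; lia.
Qed.

End Arith.

Section Arcs.
Variable n : nat.
Implicit Types (s x y b i j : 'I_n).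

Lemma in_arc0 s len x : (x \in Defs.arc n s len) = (off s x < len).
Proof. by rewrite /Defs.arc inE (modn_small (ltn_ord s)). Qed.

Lemma arc_interval b base len : 0 < len <= n -> len <= off base b ->
  exists lo hi, [/\ 0 < lo, lo < hi, hi <= n &
    forall x, (off base x < len) = (lo <= off b x < hi)].
Proof.
move=> hl hb; exists (off b base), (off b base + len).
have := offB base b b; rewrite offss => e; rewrite e in hb.
have := off_lt b base => bl.
split; [move: hb; case: ifP; lia| lia | move: hb; case: ifP; lia|].
move=> x; rewrite (offB base b x); have := off_lt b x.
move: hb; do 2 case: ifP; lia.
Qed.

Definition regionS s0 L R : {set 'I_n} := [set x | (off s0 x < L) || (R <= off s0 x)].

Lemma region_arc s0 L R : L <= R <= n ->
  regionS s0 L R = Defs.arc n (s0 + R) (n - R + L).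
Proof.
move=> h; apply/setP => x; rewrite in_arc inE /off_at.
have := off_lt s0 x.
have [->|rn] := eqVneq R n.
  rewrite (modnn n) leq0n subn0; lia.
rewrite modn_small; last by lia.
case: ifP; lia.
Qed.

Lemma interval_arc s0 a m x : a < n -> a + m <= n ->
  (x \in Defs.arc n (s0 + a) m) = (a <= off s0 x < a + m).
Proof.
move=> an am; rewrite in_arc modn_small // /off_at; have := off_lt s0 x.
case: ifP; lia.
Qed.

Lemma arc_shift s0 a m : Defs.arc n (s0 + (n + a)) m = Defs.arc n (s0 + a) m.
Proof. by apply/setP => x; rewrite !in_arc modnDl. Qed.

Lemma good_region s0 L' R' : 0 < L' -> L' <= R' <= n ->
  is_sublist (regionS s0 L' R') /\
  forall L R (B : {set 'I_n}),
    L <= L' -> R' <= R <= n ->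
    ((L < L' /\ forall x, (x \in B) = (L <= off s0 x < L')) \/
     (R' < R /\ forall x, (x \in B) = (R' <= off s0 x < R))) ->
    at_one_end B (regionS s0 L' R').
Proof.
move=> l0 h; split.
  exists (s0 + R'), (n - R' + L'); split; first lia.
  exact: region_arc.
move=> L R B hL hR [[lt hB]|[lt hB]];
  exists (s0 + R'), (n - R' + L'); [exists (L' - L) | exists (R - R')];
  (split; [lia|lia|exact: region_arc|]).
  right; have -> : s0 + R' + (n - R' + L') - (L' - L) = s0 + (n + L) by lia.
  rewrite arc_shift; apply/setP => x; rewrite hB interval_arc; [|lia|lia].
  by have -> : L + (L' - L) = L' by lia.
left; apply/setP => x; rewrite hB interval_arc; [|lia|lia].
by have -> : R' + (R - R') = R by lia.
Qed.

Section Pos.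
Variables (s0 i j : 'I_n).
Hypothesis hij : off s0 i < off s0 j.

Lemma Poo_ij x : (x \in Poo i j) = (off s0 i < off s0 x < off s0 j).
Proof.
rewrite inE (offB i s0 x) (offB i s0 j); have := off_lt s0 x; have := off_lt s0 j.
move: hij; do 2 case: ifP; lia.
Qed.

Lemma Poo_ji x : (x \in Poo j i) = (off s0 x < off s0 i) || (off s0 j < off s0 x).
Proof.
rewrite inE (offB j s0 x) (offB j s0 i); have := off_lt s0 x; have := off_lt s0 j.
move: hij; do 2 case: ifP; lia.
Qed.

Lemma Pcc_ij x : (x \in Pcc i j) = (off s0 i <= off s0 x <= off s0 j).
Proof.
rewrite /Pcc in_arc0 (offB i s0 x) (offB i s0 j); have := off_lt s0 x; have := off_lt s0 j.
move: hij; do 2 case: ifP; lia.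
Qed.

Lemma Pcc_ji x : (x \in Pcc j i) = (off s0 x <= off s0 i) || (off s0 j <= off s0 x).
Proof.
rewrite /Pcc in_arc0 (offB j s0 x) (offB j s0 i); have := off_lt s0 x; have := off_lt s0 j.
move: hij; do 2 case: ifP; lia.
Qed.
End Pos.

Lemma arc_base (s len : nat) (n0 : 0 < n) :
  exists b : 'I_n, forall x, (x \in Defs.arc n s len) = (off b x < len).
Proof. by exists (Ordinal (ltn_pmod s n0)) => x; rewrite /Defs.arc inE. Qed.

Lemma sub_interval (U : {set 'I_n}) j : is_sublist U -> j \notin U ->
  exists lo hi, [/\ 0 < lo, lo < hi, hi <= n &
    forall x, (x \in U) = (lo <= off j x < hi)].
Proof.
move=> [s [len [hl ->]]] hj.
have n0 : 0 < n by have := ltn_ord j; lia.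
have [b hb] := arc_base s len n0.
rewrite hb in hj.
have hj' : len <= off b j by rewrite leqNgt.
have [lo [hi [h1 h2 h3 h4]]] := arc_interval hl hj'.
by exists lo, hi; split => // x; rewrite hb h4.
Qed.

Lemma arcA (U : {set 'I_n}) i j x y : is_sublist U ->
  i \in U -> j \notin U -> x \in U -> off i y <= off i x <= off i j -> y \in U.
Proof.
move=> hU hi hj hx hy.
have [lo [hi' [h1 h2 h3 h4]]] := sub_interval hU hj.
move: hi hx hy; rewrite !h4 (offB i j y) (offB i j x) (offB i j j) offss.
have := off_lt j x; have := off_lt j y; have := off_lt j i.
do 3 case: ifP; lia.
Qed.

Lemma arcB (U : {set 'I_n}) i j x y : is_sublist U ->
  i \in U -> j \notin U -> y \in U -> off j y <= off j x <= off j i -> x \in U.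
Proof.
move=> hU hi hj hy hx.
have [lo [hi' [h1 h2 h3 h4]]] := sub_interval hU hj.
move: hi hy; rewrite !h4; lia.
Qed.

End Arcs.

Section Geo.
Local Open Scope ring_scope.
Variables (R : realType) (n : nat) (p : 'I_n -> R * R).
Hypothesis hstd : standing_assumptions p.

Lemma orient_cyc (u v w : R * R) : orient u v w = orient v w u.
Proof. rewrite /orient; ring. Qed.

Lemma orient_pos (s a b c : 'I_n) : (off s a < off s b < off s c)%N ->
  0 < orient (p a) (p b) (p c).
Proof.
case: hstd => _ _ _ H4 h.
have : [|| (a < b < c)%N, (b < c < a)%N | (c < a < b)%N].
  move: h; rewrite !offE; have := ltn_ord a; have := ltn_ord b; have := ltn_ord c.
  do 3 case: ifP; lia.
case/or3P => hh.
- exact: H4.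
- by rewrite orient_cyc; apply: H4.
- by rewrite orient_cyc orient_cyc; apply: H4.
Qed.

Lemma four_pts (s a b c d : 'I_n) (X Y : {set 'I_n}) :
  (off s a < off s b < off s c)%N -> (off s c < off s d)%N ->
  a \in X -> c \in X -> b \in Y -> d \in Y ->
  weakly_sep p X Y \/ weakly_sep p Y X -> False.
Proof.
move=> h1 h2 aX cX bY dY.
have Obcd : 0 < orient (p b) (p c) (p d) by apply: (orient_pos (s:=s)); lia.
have Oabd : 0 < orient (p a) (p b) (p d) by apply: (orient_pos (s:=s)); lia.
have Oacd : 0 < orient (p a) (p c) (p d) by apply: (orient_pos (s:=s)); lia.
have Oabc : 0 < orient (p a) (p b) (p c) by apply: (orient_pos (s:=s)); lia.
have key : forall al be ga : R,
  orient (p b) (p c) (p d) * (ga - (al * (p a).1 + be * (p a).2)) +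
  orient (p a) (p b) (p d) * (ga - (al * (p c).1 + be * (p c).2)) +
  orient (p a) (p c) (p d) * ((al * (p b).1 + be * (p b).2) - ga) +
  orient (p a) (p b) (p c) * ((al * (p d).1 + be * (p d).2) - ga) = 0.
  move=> al be ga; rewrite /orient; ring.
case=> [[al [be [ga [_ hX hY]]]] | [al [be [ga [_ hY hX]]]]].
- have e1 := hX a aX; have e2 := hX c cX; have e3 := hY b bY; have e4 := hY d dY.
  have := key al be ga.
  set fa := al * (p a).1 + be * (p a).2 in e1 *.
  set fb := al * (p b).1 + be * (p b).2 in e3 *.
  set fc := al * (p c).1 + be * (p c).2 in e2 *.
  set fd := al * (p d).1 + be * (p d).2 in e4 *.
  have t1 : 0 <= orient (p b) (p c) (p d) * (ga - fa) by apply: mulr_ge0; [exact: ltW | rewrite subr_ge0].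
  have t2 : 0 <= orient (p a) (p b) (p d) * (ga - fc) by apply: mulr_ge0; [exact: ltW | rewrite subr_ge0].
  have t3 : 0 < orient (p a) (p c) (p d) * (fb - ga) by rewrite mulr_gt0 // subr_gt0.
  have t4 : 0 < orient (p a) (p b) (p c) * (fd - ga) by rewrite mulr_gt0 // subr_gt0.
  lra.
- have e1 := hX a aX; have e2 := hX c cX; have e3 := hY b bY; have e4 := hY d dY.
  have := key al be ga.
  set fa := al * (p a).1 + be * (p a).2 in e1 *.
  set fb := al * (p b).1 + be * (p b).2 in e3 *.
  set fc := al * (p c).1 + be * (p c).2 in e2 *.
  set fd := al * (p d).1 + be * (p d).2 in e4 *.
  have t1 : 0 < orient (p b) (p c) (p d) * (fa - ga) by rewrite mulr_gt0 // subr_gt0.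
  have t2 : 0 < orient (p a) (p b) (p d) * (fc - ga) by rewrite mulr_gt0 // subr_gt0.
  have t3 : 0 <= orient (p a) (p c) (p d) * (ga - fb) by apply: mulr_ge0; [exact: ltW | rewrite subr_ge0].
  have t4 : 0 <= orient (p a) (p b) (p c) * (ga - fd) by apply: mulr_ge0; [exact: ltW | rewrite subr_ge0].
  lra.
Qed.
End Geo.


Lemma pw_uniq (T : eqType) (r : rel T) (s : seq T) :
  uniq s -> pairwise (fun a b => (a != b) ==> r a b) s -> pairwise r s.
Proof.
elim: s => //= a s IH /andP[an us] /andP[ha hs]; rewrite IH // andbT.
apply/allP => b bs; move/allP: ha => /(_ b bs) /implyP; apply.
by apply: contraNneq an => ->.
Qed.

Lemma pw_in (T : Type) (P : pred T) (r1 r2 : rel T) (s : seq T) :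
  all P s -> (forall a b, P a -> P b -> r1 a b -> r2 a b) ->
  pairwise r1 s -> pairwise r2 s.
Proof.
move=> hP h; elim: s hP => //= a s IH /andP[Pa Ps] /andP[ha hs].
rewrite IH // andbT.
elim: s {IH hs} Ps ha => //= b s' IH' /andP[Pb Ps'] /andP[hb hs'].
by rewrite IH' // andbT; apply: h.
Qed.

Lemma pw_rev (T : Type) (r : rel T) (s : seq T) :
  pairwise r (rev s) = pairwise (fun a b => r b a) s.
Proof.
elim: s => //= a s IH; rewrite rev_cons -cats1 pairwise_cat IH /= andbT.
congr (_ && _); rewrite /allrel all_rev; apply: eq_all => b /=; by rewrite andbT.
Qed.

Lemma pw_index (T : eqType) (s : seq T) : uniq s ->
  pairwise (fun c d => index c s < index d s) s.
Proof.
elim: s => //= a s IH /andP[an us]; apply/andP; split.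
  apply/allP => b bs /=; rewrite eqxx; case: eqP => // ab.
  by rewrite ab bs in an.
apply: (pw_in (P := fun x => x \in s)) (IH us).
  by apply/allP.
move=> x y xs ys /=.
have -> : (a == x) = false by apply/eqP => ax; rewrite ax xs in an.
by have -> : (a == y) = false by apply/eqP => ay; rewrite ay ys in an.
Qed.

Lemma subseq_by_idx (T : eqType) (s ord : seq T) : uniq ord -> {subset s <= ord} ->
  pairwise (fun c d => index c ord < index d ord) s -> subseq s ord.
Proof.
move=> uo so ps; apply/subseq_uniqP => //.
have tr : transitive (fun c d => index c ord < index d ord).
  by move=> x y z; apply: ltn_trans.
apply: (@irr_sorted_eq _ (fun c d => index c ord < index d ord)) => //.
- by move=> x; rewrite /= ltnn.
- exact: pairwise_sorted.
- apply: sorted_filter => //; apply: pairwise_sorted; exact: pw_index.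
- move=> x; rewrite mem_filter; case xs: (x \in s) => //=; by rewrite so.
Qed.


Section Basics.
Variables (R : realType) (n : nat) (p : 'I_n -> R * R).
Variables (S : {set 'I_n}) (A : {set {set 'I_n}}) (phi : {set 'I_n} -> 'I_n) (i j : 'I_n).
Hypotheses (hpart : is_partition A) (hasg : is_assignment p A phi S)
  (hp2 : property2 A phi S) (hdec : decoupling_pair A phi S i j).

Lemma partA : [/\ cover A = setT, trivIset A & set0 \notin A].
Proof. by case: hpart => /and3P[/eqP -> -> ->] _. Qed.

Lemma pbA x : pblock A x \in A.
Proof. by apply: pblock_mem; case: partA => ->. Qed.

Lemma inpb x : x \in pblock A x.
Proof. by rewrite mem_pblock; case: partA => ->. Qed.

Lemma pbE B x : B \in A -> x \in B -> pblock A x = B.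
Proof. by case: partA => _ t _; apply: def_pblock. Qed.

Lemma pb_eq B x : B \in A -> (pblock A x == B) = (x \in B).
Proof.
move=> BA; apply/eqP/idP => [<-|xB]; [exact: inpb | exact: pbE].
Qed.

Lemma nonempty B : B \in A -> exists x, x \in B.
Proof.
move=> BA; case: partA => _ _ n0.
have : B != set0 by apply: contraNneq n0 => <-.
by case/set0Pn => x; exists x.
Qed.

Lemma groupE c x : (x \in group A phi c) = (phi (pblock A x) == c).
Proof.
apply/bigcupP/eqP => [[B]|<-].
  rewrite inE => /andP[BA /eqP <-] xB; by rewrite (pbE BA xB).
by exists (pblock A x); [rewrite inE pbA eqxx | exact: inpb].
Qed.

Lemma puE ord t x : (x \in prefix_union A phi ord t) = (phi (pblock A x) \in take t ord).
Proof.
rewrite /prefix_union; elim: (take t ord) => [|c s IH]; first by rewrite big_nil inE.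
by rewrite big_cons inE IH groupE in_cons.
Qed.

Lemma asgE c B : (B \in assigned A phi c) = (B \in A) && (phi B == c).
Proof. by rewrite inE. Qed.

Lemma one_blk c B B' : #|assigned A phi c| = 1 -> B \in assigned A phi c ->
  B' \in assigned A phi c -> B' = B.
Proof.
move=> /eqP/cards1P[b ->]; rewrite !inE => /eqP -> /eqP ->; done.
Qed.

Lemma two_blk c B1 B2 B : #|assigned A phi c| = 2 -> B1 \in assigned A phi c ->
  B2 \in assigned A phi c -> B1 != B2 -> B \in assigned A phi c -> B = B1 \/ B = B2.
Proof.
move=> h2 h1 h2' ne hB.
have sub : [set B1; B2] \subset assigned A phi c by rewrite subUset !sub1set h1 h2'.
have : [set B1; B2] = assigned A phi c.
  by apply/eqP; rewrite eqEcard sub cards2 ne h2.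
move=> e; move: hB; rewrite -e !inE => /orP[] /eqP ->; by [left|right].
Qed.

Lemma card_asg c : c \in S -> 0 < #|assigned A phi c| <= 2.
Proof.
move=> cS; case: (hp2 cS) => -> [B hB _]; rewrite andbT; apply/card_gt0P; by exists B.
Qed.

Lemma phi_pb c : c \in S -> phi (pblock A c) = c.
Proof.
move=> cS; case: (hp2 cS) => _ [B]; rewrite asgE => /andP[BA /eqP <-] cB.
by rewrite (pbE BA cB).
Qed.

Lemma phiS B : B \in A -> phi B \in S.
Proof. by move=> BA; case: (hasg BA). Qed.

Lemma iS : i \in S. Proof. by case: hdec. Qed.
Lemma jS : j \in S. Proof. by case: hdec. Qed.
Lemma ij : i != j. Proof. by case: hdec. Qed.

Lemma asg1 c B B' : c \in S -> B \in assigned A phi c -> B' \in assigned A phi c ->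
  B != B' -> #|assigned A phi c| = 2.
Proof.
move=> cS h1 h2 ne; have /andP[_ le2] := card_asg cS.
have : #|[set B; B']| <= #|assigned A phi c| by apply: subset_leq_card; rewrite subUset !sub1set h1 h2.
rewrite cards2 ne; lia.
Qed.

End Basics.


Section Part2.
Variables (R : realType) (n : nat) (p : 'I_n -> R * R).
Variables (S : {set 'I_n}) (A : {set {set 'I_n}}) (phi : {set 'I_n} -> 'I_n) (i j : 'I_n).
Hypotheses (hpart : is_partition A) (hasg : is_assignment p A phi S)
  (hp2 : property2 A phi S) (hdec : decoupling_pair A phi S i j).

Lemma offij : off i i < off i j.
Proof.
rewrite offss lt0n; apply/negP => /eqP h.
have : off i j = off i i by rewrite offss.
by move/off_inj => e; move: (ij hdec); rewrite e eqxx.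
Qed.

Lemma distinct a b : a \in A -> b \in A -> a != b ->
  ((a \subset Pcc i j) && (b \subset Pcc i j)) || ((a \subset Pcc j i) && (b \subset Pcc j i)) ->
  phi a != phi b.
Proof.
move=> aA bA ab hsub; apply/negP => /eqP e.
set c := phi a.
have ha : a \in assigned A phi c by rewrite asgE aA eqxx.
have hb : b \in assigned A phi c by rewrite asgE bA -e eqxx.
have cS : c \in S by apply: (phiS hasg).
have c2 := asg1 hp2 cS ha hb ab.
case: hdec => _ _ _ [ci cj] hd.
have [B1 [B2 [h1 h2 s1 s2]]] := hd c cS c2.
have hij := offij.
have B1A : B1 \in A by move: h1; rewrite asgE => /andP[].
have B2A : B2 \in A by move: h2; rewrite asgE => /andP[].
case/orP: hsub => /andP[sa sb].
- have [z zB] := nonempty hpart B2A.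
  have zP := subsetP s2 z zB; move: zP; rewrite (Poo_ji hij) offss => zP.
  have : z \in Pcc i j.
    by case: (two_blk c2 ha hb ab h2) => ee; rewrite ee in zB; [exact: (subsetP sa) | exact: (subsetP sb)].
  rewrite (Pcc_ij hij) offss; move: zP; move: (off i z) (off i j) => u v; clear; lia.
- have [z zB] := nonempty hpart B1A.
  have zP := subsetP s1 z zB; move: zP; rewrite (Poo_ij hij) offss => zP.
  have : z \in Pcc j i.
    by case: (two_blk c2 ha hb ab h1) => ee; rewrite ee in zB; [exact: (subsetP sa) | exact: (subsetP sb)].
  rewrite (Pcc_ji hij) offss; move: zP; move: (off i z) (off i j) => u v; clear; lia.
Qed.

Lemma walk_pw (a b : 'I_n) : pairwise (fun y x => off a y < off a x) (walk a b).
Proof.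
rewrite /walk pairwise_map.
have an : (off a b).+1 <= n by have := off_lt a b.
apply: (pw_in (P := fun m => m < n) (r1 := ltn)).
- by apply/allP => m; rewrite mem_iota; lia.
- move=> x y xn yn /=; rewrite -/(ptk a x) -/(ptk a y) !off_ptk //.
- by rewrite -sorted_pairwise; [exact: iota_ltn_sorted | exact: ltn_trans].
Qed.

Section Ord.
Variable ord : seq 'I_n.
Hypotheses (huniq : uniq ord) (hmem : forall x, (x \in ord) = (x \in S))
  (hfirst : nth i ord 0 = i) (hlast : last i ord = j)
  (hsub : forall t, 0 < t <= size ord -> is_sublist (prefix_union A phi ord t)).

Lemma idx_i : index i ord = 0.
Proof.
have : i \in ord by rewrite hmem (iS hdec).
by case: ord hfirst => //= a s -> _; rewrite eqxx.
Qed.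

Lemma idx_j c : c \in ord -> c != j -> index c ord < index j ord.
Proof.
have : j \in ord by rewrite hmem (jS hdec).
case/lastP: ord huniq hlast => // s a; rewrite last_rcons => u ea; subst a.
rewrite -cats1 !index_cat; move: u; rewrite rcons_uniq => /andP[js _].
rewrite (negbTE js) /= eqxx addn0 => _.
rewrite mem_cat => /orP[cs|]; first by rewrite cs index_mem.
by rewrite mem_seq1 => ->.
Qed.

Lemma idx_inj c d : c \in ord -> index c ord = index d ord -> c = d.
Proof.
move=> cs e; have ds : d \in ord by rewrite -index_mem -e index_mem.
by rewrite -(nth_index c cs) e nth_index.
Qed.

Lemma size_j : index j ord < size ord.
Proof. by rewrite index_mem hmem (jS hdec). Qed.

Lemma pu_idx t x : (x \in prefix_union A phi ord t) = (index (phi (pblock A x)) ord < t).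
Proof. by rewrite (puE phi hpart) in_take // hmem (phiS hasg) // pbA. Qed.

Lemma core1 a b y x : a \in A -> b \in A -> a \subset Pcc i j -> b \subset Pcc i j ->
  a != b -> y \in a -> x \in b -> off i y < off i x ->
  index (phi a) ord < index (phi b) ord.
Proof.
move=> aA bA sa sb ab ya xb lt.
have cd : phi a != phi b by apply: distinct => //; rewrite sa sb.
have cS : phi a \in ord by rewrite hmem (phiS hasg).
have dS : phi b \in ord by rewrite hmem (phiS hasg).
case: (eqVneq (phi b) j) => [dj|dj].
  by rewrite dj; apply: idx_j => //; rewrite -dj.
have tj := idx_j dS dj.
set t := index (phi b) ord.
have ht : 0 < t.+1 <= size ord by have := size_j; rewrite /t; lia.
have hU := hsub ht.
have iU : i \in prefix_union A phi ord t.+1.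
  by rewrite pu_idx (phi_pb hpart hp2 (iS hdec)) idx_i.
have jU : j \notin prefix_union A phi ord t.+1.
  by rewrite pu_idx (phi_pb hpart hp2 (jS hdec)) -leqNgt.
have xU : x \in prefix_union A phi ord t.+1.
  by rewrite pu_idx (pbE hpart bA xb).
have hy : off i y <= off i x <= off i j.
  by have := subsetP sb x xb; rewrite /Pcc in_arc0 ltnS (ltnW lt).
have := arcA hU iU jU xU hy; rewrite pu_idx (pbE hpart aA ya) ltnS => le.
have ne : index (phi a) ord != t.
  by apply/eqP => e; move/eqP: cd; apply; exact: idx_inj cS e.
by rewrite ltn_neqAle ne.
Qed.

Lemma core2 a b y x : a \in A -> b \in A -> a \subset Pcc j i -> b \subset Pcc j i ->
  a != b -> y \in a -> x \in b -> off j y < off j x ->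
  index (phi b) ord < index (phi a) ord.
Proof.
move=> aA bA sa sb ab ya xb lt.
have cd : phi a != phi b by apply: distinct => //; rewrite sa sb orbT.
have cS : phi a \in ord by rewrite hmem (phiS hasg).
have dS : phi b \in ord by rewrite hmem (phiS hasg).
case: (eqVneq (phi a) j) => [cj|cj].
  by rewrite cj; apply: idx_j => //; apply: contraNneq cd => ->; rewrite cj.
have tj := idx_j cS cj.
set t := index (phi a) ord.
have ht : 0 < t.+1 <= size ord by have := size_j; rewrite /t; lia.
have hU := hsub ht.
have iU : i \in prefix_union A phi ord t.+1.
  by rewrite pu_idx (phi_pb hpart hp2 (iS hdec)) idx_i.
have jU : j \notin prefix_union A phi ord t.+1.
  by rewrite pu_idx (phi_pb hpart hp2 (jS hdec)) -leqNgt.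
have yU : y \in prefix_union A phi ord t.+1.
  by rewrite pu_idx (pbE hpart aA ya).
have hx : off j y <= off j x <= off j i.
  by have := subsetP sb x xb; rewrite /Pcc in_arc0 ltnS (ltnW lt).
have := arcB hU iU jU yU hx; rewrite pu_idx (pbE hpart bA xb) ltnS => le.
have ne : index (phi b) ord != t.
  by apply/eqP => e; move: cd; rewrite (idx_inj dS e) eqxx.
by rewrite ltn_neqAle ne.
Qed.

Lemma along_mem a b c : c \in centers_along A phi a b -> c \in ord.
Proof.
rewrite /centers_along => /mapP[B]; rewrite mem_undup => /mapP[x _ ->] ->.
by rewrite hmem (phiS hasg) // pbA.
Qed.

Lemma along_pw (a b : 'I_n) (r : rel {set 'I_n}) :
  (forall B B' y x, B \in A -> B' \in A -> B \subset Pcc a b -> B' \subset Pcc a b ->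
     B != B' -> y \in B -> x \in B' -> off a y < off a x -> r B B') ->
  pairwise r (undup [seq pblock A x | x <- walk a b & pblock A x \subset Pcc a b]).
Proof.
move=> H.
set r0 := fun B B' : {set 'I_n} => (B != B') && [&& B \in A, B' \in A, B \subset Pcc a b, B' \subset Pcc a b &
   [exists y, [exists x, [&& y \in B, x \in B' & off a y < off a x]]]].
apply: (sub_pairwise (r := r0)).
  move=> B B' /andP[ne /and5P[h1 h2 h3 h4 /existsP[y /existsP[x /and3P[h5 h6 h7]]]]].
  by apply: (H B B' y x).
refine (pw_uniq (undup_uniq _) _).
apply: subseq_pairwise (undup_subseq _) _.
rewrite pairwise_map.
apply: (pw_in (P := fun x => pblock A x \subset Pcc a b) (r1 := fun y x => off a y < off a x)).
- exact: filter_all.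
- move=> y x cy cx lt /=; apply/implyP => ne.
  rewrite /r0 ne !(pbA hpart) cy cx /=; apply/existsP; exists y; apply/existsP; exists x.
  by rewrite !(inpb hpart) lt.
- exact: pairwise_filter (walk_pw a b).
Qed.

Lemma part_ii : subseq (centers_along A phi i j) ord /\
  subseq (rev (centers_along A phi j i)) ord.
Proof.
split.
  apply: subseq_by_idx => //; first by move=> c; apply: along_mem.
  rewrite /centers_along pairwise_map; apply: along_pw => B B' y x *.
  exact: (core1 (y := y) (x := x)).
apply: subseq_by_idx => //; first by move=> c; rewrite mem_rev; apply: along_mem.
rewrite pw_rev /centers_along pairwise_map; apply: along_pw => B B' y x *.
exact: (core2 (y := y) (x := x)).
Qed.


End Ord.
End Part2.


Ltac cl := repeat match goal with H : ?T |- _ => (match type of T with Prop => clear H end) end.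

Section Constr.
Variables (R : realType) (n : nat) (p : 'I_n -> R * R).
Variables (S : {set 'I_n}) (A : {set {set 'I_n}}) (phi : {set 'I_n} -> 'I_n) (i j : 'I_n).
Hypotheses (hstd : standing_assumptions p) (hpart : is_partition A)
  (hasg : is_assignment p A phi S) (hsep : line_separable p A phi S)
  (hp2 : property2 A phi S) (hdec : decoupling_pair A phi S i j).

Local Notation I := (pblock A i).
Local Notation J := (pblock A j).
Local Notation ctr x := (phi (pblock A x)).

Lemma phiI : phi I = i. Proof. exact: (phi_pb hpart hp2 (iS hdec)). Qed.
Lemma phiJ : phi J = j. Proof. exact: (phi_pb hpart hp2 (jS hdec)). Qed.

Lemma asgI B : B \in assigned A phi i -> B = I.
Proof.
move=> hB; case: hdec => _ _ _ [c1 _] _; apply: (one_blk c1) hB.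
by rewrite asgE (pbA hpart) phiI eqxx.
Qed.

Lemma asgJ B : B \in assigned A phi j -> B = J.
Proof.
move=> hB; case: hdec => _ _ _ [_ c1] _; apply: (one_blk c1) hB.
by rewrite asgE (pbA hpart) phiJ eqxx.
Qed.

Lemma ctr_eq c x : (ctr x == c) = (pblock A x \in assigned A phi c).
Proof. by rewrite asgE (pbA hpart). Qed.

Lemma blk_eq B B' x : B \in A -> B' \in A -> x \in B -> x \in B' -> B = B'.
Proof. by move=> h1 h2 x1 x2; rewrite -(pbE hpart h1 x1) (pbE hpart h2 x2). Qed.

Lemma sublA B : B \in A -> is_sublist B.
Proof. by case: hpart => _; apply. Qed.

Variables (s0 : 'I_n) (m0 : nat).
Hypotheses (hm0 : 0 < m0 <= n) (hI : forall x, (x \in I) = (off s0 x < m0)).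

Local Notation pos := (off s0).
Local Notation pt := (ptk s0).

Lemma pos_pt k : k < n -> pos (pt k) = k.
Proof. exact: off_ptk. Qed.

Lemma blk_int B : B \in A -> B != I -> exists lo hi,
  [/\ m0 <= lo, lo < hi, hi <= n & forall x, (x \in B) = (lo <= pos x < hi)].
Proof.
move=> BA BI.
have s0B : s0 \notin B.
  apply/negP => sB; have sI : s0 \in I by rewrite hI offss; case/andP: hm0.
  by move: BI; rewrite (blk_eq BA (pbA hpart i) sB sI) eqxx.
have [lo [hi [h1 h2 h3 h4]]] := sub_interval (sublA BA) s0B.
exists lo, hi; split => //.
have ptB : pt lo \in B by rewrite h4 pos_pt; [lia | lia].
rewrite leqNgt; apply/negP => lt.
have ptI : pt lo \in I by rewrite hI pos_pt //; lia.
by move: BI; rewrite (blk_eq BA (pbA hpart i) ptB ptI) eqxx.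
Qed.


Variables (ja jb : nat).
Hypotheses (hja : m0 <= ja < jb) (hjb : jb <= n) (hJ : forall x, (x \in J) = (ja <= pos x < jb)).

Lemma pos_i : pos i < m0. Proof. by rewrite -hI (inpb hpart). Qed.
Lemma pos_j : ja <= pos j < jb. Proof. by rewrite -hJ (inpb hpart). Qed.
Lemma hij : pos i < pos j. Proof. have := pos_i; have := pos_j; lia. Qed.

Definition Inv pre L Q :=
 [/\ m0 <= L <= ja, jb <= Q <= n,
   [/\ uniq pre, {subset pre <= S}, 0 < size pre, nth i pre 0 = i & j \notin pre],
   forall x, (ctr x \in pre) = (pos x < L) || (Q <= pos x) &
   forall t, 0 < t <= size pre -> is_sublist (prefix_union A phi pre t) /\
     forall B, B \in assigned A phi (nth i pre t.-1) -> at_one_end B (prefix_union A phi pre t)].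

Lemma blk_in pre L Q B : Inv pre L Q -> B \in A -> B != I -> B != J -> phi B \notin pre ->
  exists lo hi, [/\ L <= lo, lo < hi, hi <= Q, (hi <= ja) || (jb <= lo) &
    forall x, (x \in B) = (lo <= pos x < hi)].
Proof.
move=> [hL hR _ h3 _] BA BI BJ Bp.
have [lo [hi [h1 h2 h4 h5]]] := blk_int BA BI.
have inB k : lo <= k < hi -> pt k \in B by move=> hk; rewrite h5 pos_pt //; lia.
have ctrB k : lo <= k < hi -> ctr (pt k) = phi B.
  by move=> hk; rewrite (pbE hpart BA (inB k hk)).
have out k : lo <= k < hi -> L <= k < Q.
  move=> hk; have := h3 (pt k); rewrite ctrB // (negbTE Bp) pos_pt; last by lia.
  move=> /esym /negbT; lia.
have o1 : L <= lo < Q by apply: out; lia.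
have o2 : L <= hi.-1 < Q by apply: out; lia.
exists lo, hi; split; [lia|lia|lia| |exact: h5].
apply/negPn/negP => hn.
have k1 : lo <= maxn lo ja < hi by lia.
have ptJ : pt (maxn lo ja) \in J by rewrite hJ pos_pt; lia.
by move: BJ; rewrite (blk_eq BA (pbA hpart j) (inB _ k1) ptJ) eqxx.
Qed.


Lemma ana pre L Q k : Inv pre L Q -> L <= k < Q -> (k < ja) || (jb <= k) ->
 exists c lo1 hi1 lo2 hi2,
  [/\ c \in S, c \notin pre, c != j, ctr (pt k) = c &
   [/\ L <= lo1 <= hi1, hi1 <= ja, jb <= lo2 <= hi2, hi2 <= Q &
    (forall x, (ctr x == c) = (lo1 <= pos x < hi1) || (lo2 <= pos x < hi2)) /\
    (forall B, B \in assigned A phi c -> (forall x, (x \in B) = (lo1 <= pos x < hi1)) \/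
                                        (forall x, (x \in B) = (lo2 <= pos x < hi2)))]].
Proof.
move=> inv hk hs; have inv' := inv; case: inv' => hL hQ _ h3 _.
have kn : k < n by move: hk hQ; cl; lia.
have [B BA xB] : exists2 B, B \in A & pt k \in B.
  by exists (pblock A (pt k)); [exact: pbA | exact: inpb].
have ctrk : ctr (pt k) = phi B by rewrite (pbE hpart BA xB).
have cS := phiS hasg BA.
have cp : phi B \notin pre by rewrite -ctrk h3 pos_pt //; move: hk; cl; lia.
have Bc : B \in assigned A phi (phi B) by rewrite asgE BA eqxx.
have ci : phi B != i.
  apply/eqP => e; have BI : B = I by apply: asgI; rewrite asgE BA e eqxx.
  by move: xB; rewrite BI hI pos_pt //; move: hk hL; cl; lia.
have cj : phi B != j.
  apply/eqP => e; have BJ : B = J by apply: asgJ; rewrite asgE BA e eqxx.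
  by move: xB hs; rewrite BJ hJ pos_pt //; cl; lia.
have gen : forall B', B' \in assigned A phi (phi B) -> exists lo hi,
    [/\ L <= lo, lo < hi, hi <= Q, (hi <= ja) || (jb <= lo) &
      forall x, (x \in B') = (lo <= pos x < hi)].
  move=> B'; rewrite asgE => /andP[B'A /eqP e]; apply: (blk_in inv B'A).
  - by apply/eqP => e'; move: ci; rewrite -e e' phiI eqxx.
  - by apply/eqP => e'; move: cj; rewrite -e e' phiJ eqxx.
  - by rewrite e.
have := card_asg hp2 cS; case/andP => c0 c2.
case: (eqVneq #|assigned A phi (phi B)| 1) => [c1|c1'].
  have [lo [hi [l1 l2 l3 l4 l5]]] := gen B Bc.
  have charB y : (ctr y == phi B) = (y \in B).
    rewrite ctr_eq; apply/idP/idP => [h|h].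
      by rewrite -(one_blk c1 Bc h); exact: inpb.
    by rewrite (pbE hpart BA h) Bc.
  case/orP: l4 => side.
    exists (phi B), lo, hi, jb, jb; split => //; split;
      [move: l1 l2; cl; lia|done|move: hja; cl; lia|move: hQ; cl; lia|split].
      by move=> y; rewrite charB l5; move: (pos y); cl; lia.
    by move=> B' hB'; left; rewrite (one_blk c1 Bc hB').
  exists (phi B), L, L, lo, hi; split => //; split;
    [move: hL; cl; lia|move: hL; cl; lia|move: side l2; cl; lia|done|split].
    by move=> y; rewrite charB l5; move: (pos y); cl; lia.
  by move=> B' hB'; right; rewrite (one_blk c1 Bc hB').
have c2' : #|assigned A phi (phi B)| = 2.
  by move: c0 c1' c2; move: #|_|; cl; lia.
case: hdec => _ _ _ _ hd; have [B1 [B2 [h1 h2 s1 s2]]] := hd _ cS c2'.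
have B1A : B1 \in A by move: h1; rewrite asgE => /andP[].
have B2A : B2 \in A by move: h2; rewrite asgE => /andP[].
have hij' := hij.
have n12 : B1 != B2.
  apply/eqP => e; have [z zB] := nonempty hpart B1A.
  have := subsetP s1 z zB; have := subsetP s2 z; rewrite -e => /(_ zB).
  rewrite (Poo_ij hij') (Poo_ji hij').
  move: (off s0 z) (off s0 i) (off s0 j) => a b d; clear; lia.
have two := two_blk c2' h1 h2 n12.
have [lo1 [hi1 [a1 a2 a3 a4 a5]]] := gen B1 h1.
have [lo2 [hi2 [b1 b2 b3 b4 b5]]] := gen B2 h2.
have pj := pos_j.
have pi := pos_i.
have q1 : lo1 < pos j.
  have : pt lo1 \in B1 by rewrite a5 pos_pt; [move: a2; cl; lia | move: a2 a3 hQ; cl; lia].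
  move/(subsetP s1); rewrite (Poo_ij hij') pos_pt; last by move: a2 a3 hQ; cl; lia.
  by cl; lia.
have q2 : pos j < lo2.
  have : pt lo2 \in B2 by rewrite b5 pos_pt; [move: b2; cl; lia | move: b2 b3 hQ; cl; lia].
  move/(subsetP s2); rewrite (Poo_ji hij') pos_pt; last by move: b2 b3 hQ; cl; lia.
  by move: pi b1 hL; cl; lia.
exists (phi B), lo1, hi1, lo2, hi2; split => //; split;
  [move: a1 a2; cl; lia|move: q1 pj a4; cl; lia|move: q2 pj b2 b4; cl; lia|done|split].
  move=> y; rewrite ctr_eq -a5 -b5; apply/idP/idP => [h|/orP[h|h]].
    by case: (two _ h) => <-; rewrite (inpb hpart) ?orbT.
    by rewrite (pbE hpart B1A h).
  by rewrite (pbE hpart B2A h).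
move=> B' /two [->|->]; [left|right] => //.
Qed.


Lemma take_rcons_le (T : Type) (s : seq T) x t : t <= size s -> take t (rcons s x) = take t s.
Proof. by move=> h; rewrite -cats1 takel_cat. Qed.

Lemma ext pre L Q c L' Q' : Inv pre L Q -> c \in S -> c != j ->
  L <= L' <= ja -> jb <= Q' <= Q -> (L < L') || (Q' < Q) ->
  (forall x, (ctr x == c) = (L <= pos x < L') || (Q' <= pos x < Q)) ->
  (forall B, B \in assigned A phi c -> (forall x, (x \in B) = (L <= pos x < L')) \/
                                      (forall x, (x \in B) = (Q' <= pos x < Q))) ->
  Inv (rcons pre c) L' Q'.
Proof.
move=> [hL hQ [u1 u2 u3 u4 u5] h3 h4] cS cj hL' hQ' hne hchar hblk.
have cp : c \notin pre.
  pose k := if L < L' then L else Q.-1.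
  have kk : (L <= k < Q) && ((L <= k < L') || (Q' <= k < Q)).
    by rewrite /k; case: ifP => h; move: h hne hL' hQ' hL hQ hja; cl; lia.
  have kn : k < n by move: kk hQ; cl; lia.
  have : ctr (pt k) == c by rewrite hchar pos_pt //; move: kk; cl; lia.
  by move/eqP => e; rewrite -e h3 pos_pt //; move: kk; cl; lia.
have h3' x : (ctr x \in rcons pre c) = (pos x < L') || (Q' <= pos x).
  by rewrite mem_rcons in_cons hchar h3; move: (pos x) hL' hQ'; cl; lia.
split.
- by move: hL hL'; cl; lia.
- by move: hQ hQ'; cl; lia.
- split.
  + by rewrite rcons_uniq cp u1.
  + by move=> y; rewrite mem_rcons in_cons => /orP[/eqP->|/u2].
  + by rewrite size_rcons.
  + by rewrite nth_rcons u3.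
  + by rewrite mem_rcons in_cons negb_or eq_sym cj.
- exact: h3'.
move=> t; rewrite size_rcons => ht.
case: (ltnP (size pre) t) => tt.
  have et : t = (size pre).+1 by move: ht tt; cl; lia.
  rewrite et /=.
  have pu : prefix_union A phi (rcons pre c) (size pre).+1 = regionS s0 L' Q'.
    by apply/setP => x; rewrite (puE phi hpart) take_oversize ?size_rcons // inE h3'.
  rewrite pu nth_rcons ltnn eqxx.
  have l0 : 0 < L' by move: hL hL' hm0; cl; lia.
  have lq : L' <= Q' <= n by move: hL' hQ' hQ hja; cl; lia.
  have [g1 g2] := good_region s0 l0 lq.
  split => // B hB; apply: (g2 L Q B); [by move: hL'; cl; lia | by move: hQ' hQ; cl; lia |].
  have BA : B \in A by move: hB; rewrite asgE => /andP[].
  have [z zB] := nonempty hpart BA.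
  by case: (hblk B hB) => hb; [left|right]; split => //; move: zB; rewrite hb; cl; lia.
rewrite /prefix_union take_rcons_le // nth_rcons.
have -> : t.-1 < size pre by move: ht tt; cl; lia.
by apply: h4; move: ht tt; cl; lia.
Qed.


Lemma right_step pre L Q : Inv pre L Q -> jb < Q ->
  (forall d l1 h1, ctr (pt Q.-1) = d -> L <= l1 -> l1 < h1 -> h1 <= ja ->
     ctr (pt l1) = d -> False) ->
  exists c L' Q', Q' - L' < Q - L /\ Inv (rcons pre c) L' Q'.
Proof.
move=> inv hq H; have inv' := inv; case: inv' => hL hQ _ _ _.
have hk : L <= Q.-1 < Q by move: hL hq hja; cl; lia.
have hs : (Q.-1 < ja) || (jb <= Q.-1) by move: hq; cl; lia.
have qn : Q.-1 < n by move: hq hQ; cl; lia.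
have [d [l1 [h1 [l2 [h2 [dS dp dj e [a1 a2 b1 b2 [chd bld]]]]]]]] := ana inv hk hs.
have w := chd (pt Q.-1); rewrite e eqxx pos_pt // in w.
have h2Q : h2 = Q by move: w a2 b2 hq hja; cl; lia.
have l2Q : l2 <= Q.-1 by move: w a2 hq hja; cl; lia.
case: (ltnP l1 h1) => lh.
  exfalso; apply: (H d l1 h1 e) => //; first by move: a1; cl; lia.
  have l1n : l1 < n by move: lh a2 hja hjb; cl; lia.
  by apply/eqP; rewrite chd pos_pt //; move: lh; cl; lia.
exists d, L, l2; split; first by move: l2Q b1 hL hja hq; cl; lia.
apply: (ext inv dS dj).
- by move: hL; cl; lia.
- by move: b1 l2Q hq; cl; lia.
- by move: l2Q hq; cl; lia.
- by move=> x; rewrite chd h2Q; move: (pos x) lh; cl; lia.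
move=> B /bld [hb|hb]; [left|right] => x; rewrite hb.
  by move: (pos x) lh; cl; lia.
by rewrite h2Q.
Qed.

Lemma step pre L Q : Inv pre L Q -> (L < ja) || (jb < Q) ->
  exists c L' Q', Q' - L' < Q - L /\ Inv (rcons pre c) L' Q'.
Proof.
move=> inv hc; have inv' := inv; case: inv' => hL hQ _ _ _.
case: (ltnP L ja) => hLj; last first.
  have hq : jb < Q by move: hc hLj; cl; lia.
  apply: (right_step inv hq) => d l1 h1 _ a b c' _.
  by move: a b c' hLj; cl; lia.
have hk : L <= L < Q by move: hLj hja hQ; cl; lia.
have hs : (L < ja) || (jb <= L) by rewrite hLj.
have Ln : L < n by move: hLj hja hjb; cl; lia.
have [c [lo1 [hi1 [lo2 [hi2 [cS cp cj eL [a1 a2 b1 b2 [chc blc]]]]]]]] := ana inv hk hs.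
have w := chc (pt L); rewrite eL eqxx pos_pt // in w.
have lo1L : lo1 = L by move: w a1 b1 hLj hja; cl; lia.
have Lh1 : L < hi1 by move: w a1 b1 hLj hja; cl; lia.
case: (eqVneq hi2 Q) => e2.
  exists c, hi1, lo2; split; first by move: Lh1 a2 b1 b2 hja; cl; lia.
  apply: (ext inv cS cj).
  - by move: Lh1 a2; cl; lia.
  - by move: b1 b2; cl; lia.
  - by rewrite Lh1.
  - by move=> x; rewrite chc lo1L e2.
  by move=> B /blc [hb|hb]; [left|right] => x; rewrite hb ?lo1L ?e2.
case: (eqVneq lo2 hi2) => e3.
  exists c, hi1, Q; split; first by move: Lh1 a2 hja hQ; cl; lia.
  apply: (ext inv cS cj).
  - by move: Lh1 a2; cl; lia.
  - by move: hQ; cl; lia.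
  - by rewrite Lh1.
  - by move=> x; rewrite chc lo1L e3; move: (pos x); cl; lia.
  move=> B /blc [hb|hb]; [left|right] => x; rewrite hb ?lo1L //.
  by rewrite e3; move: (pos x); cl; lia.
have hq : jb < Q by move: b1 b2 e2 e3; cl; lia.
apply: (right_step inv hq) => d l1 h1 ed Ll1 l1h1 h1ja el1.
have Qn : Q.-1 < n by move: hq hQ; cl; lia.
have dS : d \in S by rewrite -ed; apply: (phiS hasg); exact: pbA.
have dc : c != d.
  apply/eqP => e; have := chc (pt Q.-1); rewrite ed -e eqxx pos_pt //.
  by move: a2 b1 b2 e2 hja; cl; lia.
have Ll1' : L < l1.
  rewrite ltn_neqAle Ll1 andbT; apply/eqP => e; move: dc.
  by rewrite -eL -el1 e eqxx.
have l1n : l1 < n by move: l1h1 h1ja hja hjb; cl; lia.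
have lo2n : lo2 < n by move: b1 b2 e3 hQ; cl; lia.
apply: (four_pts hstd (s := s0) (a := pt L) (b := pt l1) (c := pt lo2) (d := pt Q.-1)
          (X := group A phi c) (Y := group A phi d)).
- rewrite !pos_pt //; move: Ll1' l1h1 h1ja hja b1; cl; lia.
- rewrite !pos_pt //; move: b1 b2 e2 e3; cl; lia.
- by rewrite (groupE phi hpart) eL.
- by rewrite (groupE phi hpart) chc pos_pt //; move: b1 e3; cl; lia.
- by rewrite (groupE phi hpart) el1.
- by rewrite (groupE phi hpart) ed.
- exact: hsep cS dS dc.
Qed.


Lemma iter_inv k : forall pre L Q, Q - L <= k -> Inv pre L Q -> exists pre', Inv pre' ja jb.
Proof.
elim: k => [|k IH] pre L Q hk inv; have inv' := inv; case: inv' => hL hQ _ _ _.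
  by exfalso; move: hk hL hQ hja; cl; lia.
case: (boolP ((L < ja) || (jb < Q))) => hc.
  have [c [L' [Q' [hm inv2]]]] := step inv hc.
  by apply: (IH _ L' Q') inv2; move: hm hk; cl; lia.
have e1 : L = ja by move: hc hL hQ; cl; lia.
have e2 : Q = jb by move: hc hL hQ; cl; lia.
by rewrite e1 e2 in inv; exists pre.
Qed.

Lemma charI x : (pblock A x \in assigned A phi i) = (x \in I).
Proof.
apply/idP/idP => [/asgI <-|h]; first exact: inpb.
by rewrite (pbE hpart (pbA hpart i) h) asgE (pbA hpart) phiI eqxx.
Qed.

Lemma init : Inv [:: i] m0 n.
Proof.
split.
- by move: hm0 hja; cl; lia.
- by move: hja hjb; cl; lia.
- split => //.
  + by move=> y; rewrite inE => /eqP ->; exact: iS hdec.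
  + by rewrite inE eq_sym; exact: ij hdec.
- by move=> x; rewrite inE ctr_eq charI hI; have := off_lt s0 x; move: (pos x); cl; lia.
move=> t /= ht; have -> : t = 1 by move: ht; cl; lia.
have pu : prefix_union A phi [:: i] 1 = regionS s0 m0 n.
  apply/setP => x; rewrite (puE phi hpart) /= !inE ctr_eq charI hI.
  by have := off_lt s0 x; move: (pos x); cl; lia.
rewrite pu.
have l0 : 0 < m0 by move: hm0; cl; lia.
have lq : m0 <= n <= n by move: hm0; cl; lia.
have [g1 g2] := good_region s0 l0 lq.
split => // B /asgI ->; apply: (g2 0 n) => //; first by rewrite leqnn.
by left; split => // x; rewrite hI.
Qed.

Lemma final pre : Inv pre ja jb -> exists ord : seq 'I_n,
  [/\ uniq ord, (forall x, (x \in ord) = (x \in S)), nth i ord 0 = i, last i ord = j &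
    forall t, 0 < t <= size ord -> is_sublist (prefix_union A phi ord t) /\
      forall B, B \in assigned A phi (nth i ord t.-1) -> at_one_end B (prefix_union A phi ord t)].
Proof.
move=> [hL hQ [u1 u2 u3 u4 u5] h3 h4]; exists (rcons pre j).
have inJ x : x \in J -> ctr x = j by move=> h; rewrite (pbE hpart (pbA hpart j) h) phiJ.
have allc x : ctr x \in rcons pre j.
  rewrite mem_rcons in_cons; case: (boolP (ja <= pos x < jb)) => hx.
    by rewrite inJ ?eqxx // hJ.
  by rewrite h3; move: hx; cl; lia.
split.
- by rewrite rcons_uniq u5 u1.
- move=> x; apply/idP/idP => [|xS].
    by rewrite mem_rcons in_cons => /orP[/eqP->|/u2] //; exact: jS hdec.
  by have := allc x; rewrite (phi_pb hpart hp2 xS).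
- by rewrite nth_rcons u3.
- by rewrite last_rcons.
move=> t; rewrite size_rcons => ht.
case: (ltnP (size pre) t) => tt.
  have et : t = (size pre).+1 by apply/eqP; rewrite eqn_leq tt andbT; case/andP: ht.
  rewrite et /=.
  have pu : prefix_union A phi (rcons pre j) (size pre).+1 = setT.
    by apply/setP => x; rewrite (puE phi hpart) take_oversize ?size_rcons // allc inE.
  rewrite pu nth_rcons ltnn eqxx.
  have jan : ja < n by move: hja hjb; cl; lia.
  split.
    exists s0, n; split; first by move: hm0; cl; lia.
    by apply/setP => x; rewrite inE in_arc0 off_lt.
  move=> B /asgJ ->; exists (s0 + ja), n, (jb - ja); split.
  - by move: hm0; cl; lia.
  - by move: hja hjb; cl; lia.
  - apply/setP => x; rewrite inE in_arc modn_small // /off_at.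
    by have := off_lt s0 x; move: (pos x) jan; cl => a b c; case: ifP; lia.
  left; apply/setP => x; rewrite hJ interval_arc //; last by move: hja hjb; cl; lia.
  by have -> : ja + (jb - ja) = jb by move: hja; cl; lia.
rewrite /prefix_union take_rcons_le // nth_rcons.
have -> : t.-1 < size pre by case/andP: ht => t0 _; rewrite -(prednK t0) in tt.
by apply: h4; case/andP: ht => -> _; exact: tt.
Qed.

End Constr.
End Aux.
Import Aux.
Local Open Scope ring_scope.

Theorem lemma5 (R : realType) (n : nat) (p : 'I_n -> R * R)
  (w : 'I_n -> R) (S : {set 'I_n}) (A : {set {set 'I_n}})
  (phi : {set 'I_n} -> 'I_n) (i j : 'I_n) :
  standing_assumptions p ->
  (forall x, 0 < w x) ->
  optimal_dominating p w S ->
  is_partition A ->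
  is_assignment p A phi S ->
  line_separable p A phi S ->
  property2 A phi S ->
  property3 p A phi S ->
  decoupling_pair A phi S i j ->
  exists ord : seq 'I_n,
    [/\ uniq ord /\ (forall x, (x \in ord) = (x \in S)) /\ size ord = #|S|,
        (* (i) *)
        nth i ord 0 = i /\ last i ord = j,
        (* (ii) *)
        subseq (centers_along A phi i j) ord /\
        subseq (rev (centers_along A phi j i)) ord,
        (* (iii) *)
        (forall t, (1 <= t <= #|S|)%N -> is_sublist (prefix_union A phi ord t)) /\
        (* (iv) *)
        (forall t, (2 <= t <= #|S|)%N ->
           prefix_union A phi ord t.-1 \subset prefix_union A phi ord t)
      & (* (v) *)
        (forall t, (1 <= t <= #|S|)%N -> forall B, B \in assigned A phi (nth i ord t.-1) ->
           at_one_end B (prefix_union A phi ord t))].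
Proof.
move=> hstd _ _ hpart hasg hsep hp2 _ hdec.
have n0 : (0 < n)%N by have := ltn_ord i; lia.
have IA := pbA hpart i.
have [s [len [hl eI]]] := sublA hpart IA.
have [b hb] := arc_base s len n0.
have hI : forall x, (x \in pblock A i) = (off b x < len)%N by move=> x; rewrite eI hb.
have JI : pblock A j != pblock A i.
  apply/eqP => e; have := phi_pb hpart hp2 (jS hdec); rewrite e (phi_pb hpart hp2 (iS hdec)).
  by move=> eij; move: (ij hdec); rewrite eij eqxx.
have [ja [jb [h1 h2 h3 h4]]] := blk_int hpart hl hI (pbA hpart j) JI.
have hja : (len <= ja < jb)%N by rewrite h1 h2.
have inv0 := init hpart hp2 hdec hl hI hja h3.
have [pre invf] := iter_inv hstd hpart hasg hsep hp2 hdec hl hI hja h3 h4 (k := (n - len)%N) (leqnn _) inv0.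
have [ord [u hmem hf hlast hpu]] := final hpart hp2 hdec hl hja h3 h4 invf.
have hsz : size ord = #|S|.
  by rewrite -(card_uniqP u); apply: eq_card => x; rewrite hmem.
have hsub : forall t, (0 < t <= size ord)%N -> is_sublist (prefix_union A phi ord t).
  by move=> t ht; case: (hpu t ht).
have [ii1 ii2] := part_ii hpart hasg hp2 hdec u hmem hf hlast hsub.
exists ord; split => //.
- split.
    by move=> t; rewrite -hsz => ht; apply: hsub.
  move=> t ht; apply/subsetP => x; rewrite !(puE phi hpart).
  have hx : phi (pblock A x) \in ord by rewrite hmem (phiS hasg) // pbA.
  rewrite !in_take //; move: ht; clear; lia.
- by move=> t; rewrite -hsz => ht; case: (hpu t ht).
Qed.
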